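(* Let $m$ be a positive integer, let $\alpha>1$ with $56^m(\alpha-1)<1$, let $\mathcal{S}$ be an $\alpha$-Carleson family of dyadic cubes in $\mathbb{R}^n$, let $f\ge0$ be locally integrable, and for a positive integer $k$ let $\mathcal{S}_k=\{Q\in\mathcal{S}:\ 56^{-m(k+1)}<\frac{1}{|Q|}\int_Qf\le56^{-km}\}$. For $Q\in\mathcal{S}_k$ put $E_Q=Q\setminus\bigcup_{Q'\in\mathcal{S}_k,\,Q'\subsetneq Q}Q'$. Then for every $Q\in\mathcal{S}_k$, \[ \int_Qf\le\frac{1}{1-56^m(\alpha-1)}\int_{E_Q}f. \]
   Context: A family $\mathcal{S}$ of dyadic cubes is $\alpha$-Carleson ($\alpha>1$) if $\sum_{P\in\mathcal{S},\,P\subseteq Q}|P|\le\alpha|Q|$ for every $Q\in\mathcal{S}$. *)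

(* Defs.v *)
From HB Require Import structures.
From mathcomp Require Import all_boot all_order all_algebra.
From mathcomp Require Import all_classical all_reals all_analysis.
Set Implicit Arguments. Unset Strict Implicit. Unset Printing Implicit Defensive.
Import Order.TTheory GRing.Theory Num.Theory.
Local Open Scope classical_set_scope.
Local Open Scope ring_scope.

(* Points of R^n are n-tuples of reals; n.-tuple R carries the library's
   product (= Borel) sigma-algebra [measure_tuple_display]. *)

Definition box (R : realType) (n : nat) (a b : n.-tuple R) : set (n.-tuple R) :=
  [set x | forall i : 'I_n, tnth a i <= tnth x i < tnth b i].

(* mu is Lebesgue measure on R^n: it gives every half-open box its volume.
   (By uniqueness of extension this characterizes Lebesgue measure on the
   Borel sets.) *)
Definition is_lebesgue (R : realType) (n : nat)
    (mu : {measure set (n.-tuple R) -> \bar R}) : Prop :=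
  forall a b : n.-tuple R, (forall i : 'I_n, tnth a i <= tnth b i) ->
    mu (box a b) = (\prod_(i < n) (tnth b i - tnth a i))%:E.

Definition dyadic_cube (R : realType) (n : nat) (j : int) (k : n.-tuple int)
    : set (n.-tuple R) :=
  [set x | forall i : 'I_n,
     (tnth k i)%:~R * (2%:R ^ j) <= tnth x i < ((tnth k i)%:~R + 1) * (2%:R ^ j)].

Definition is_dyadic (R : realType) (n : nat) (Q : set (n.-tuple R)) : Prop :=
  exists (j : int) (k : n.-tuple int), Q = @dyadic_cube R n j k.

Definition carleson (R : realType) (n : nat)
    (mu : {measure set (n.-tuple R) -> \bar R})
    (alpha : R) (S : set (set (n.-tuple R))) : Prop :=
  (forall Q, S Q -> is_dyadic Q) /\
  forall Q, S Q ->
    (\esum_(P in [set P | S P /\ P `<=` Q]) mu P <= alpha%:E * mu Q)%E.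

Definition bounded_set (R : realType) (n : nat) (A : set (n.-tuple R)) : Prop :=
  exists r : R, forall x, A x -> forall i : 'I_n, `|tnth x i| <= r.

Definition loc_integrable_Rn (R : realType) (n : nat)
    (mu : {measure set (n.-tuple R) -> \bar R}) (f : n.-tuple R -> R) : Prop :=
  measurable_fun setT f /\
  forall A, measurable A -> bounded_set A -> mu.-integrable A (EFin \o f).

Definition average (R : realType) (n : nat)
    (mu : {measure set (n.-tuple R) -> \bar R}) (f : n.-tuple R -> R)
    (Q : set (n.-tuple R)) : R :=
  fine (\int[mu]_(x in Q) (f x)%:E) / fine (mu Q).

Definition layer (R : realType) (n : nat)
    (mu : {measure set (n.-tuple R) -> \bar R}) (f : n.-tuple R -> R)
    (S : set (set (n.-tuple R))) (m k : nat) : set (set (n.-tuple R)) :=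
  [set Q | S Q /\ ((56%:R : R) ^+ (m * k.+1))^-1 < average mu f Q
                /\ average mu f Q <= ((56%:R : R) ^+ (m * k))^-1].

Definition EQ (R : realType) (n : nat) (Sk : set (set (n.-tuple R)))
    (Q : set (n.-tuple R)) : set (n.-tuple R) :=
  Q `\` \bigcup_(Q' in [set Q' | Sk Q' /\ Q' `<=` Q /\ Q' <> Q]) Q'.

(* Main.v *)
From Pilot Require Import Defs.
From HB Require Import structures.
From mathcomp Require Import all_boot all_order all_algebra.
From mathcomp Require Import all_classical all_reals all_analysis.
From mathcomp Require Import ring lra.
From mathcomp Require Import measurable_realfun.
Import Order.TTheory GRing.Theory Num.Theory.
Local Open Scope classical_set_scope.
Local Open Scope ring_scope.

Section S.
Context {R : realType} {n : nat}.
Local Notation T := (n.-tuple R).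

Lemma box_measurable (a b : T) : measurable (box a b).
Proof.
have -> : box a b = \bigcap_(i in [set: 'I_n])
   ((fun x : T => tnth x i) @^-1` `[tnth a i, tnth b i[).
  apply/seteqP; split => x /=.
    by move=> h i _ /=; rewrite in_itv /=; exact: h.
  by move=> h i; have := h i I; rewrite /= in_itv.
apply: fin_bigcap_measurable => // i _.
rewrite -[X in measurable X]setTI.
by apply: measurable_tnth => //; exact: measurable_itv.
Qed.

Definition clo (j : int) (k : n.-tuple int) : T :=
  [tuple (tnth k i)%:~R * (2%:R ^ j) | i < n].
Definition chi (j : int) (k : n.-tuple int) : T :=
  [tuple ((tnth k i)%:~R + 1) * (2%:R ^ j) | i < n].

Lemma cube_box j k : dyadic_cube j k = box (clo j k) (chi j k).
Proof.
by apply/seteqP; split => x /= h i; have := h i; rewrite ?tnth_mktuple.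
Qed.

Lemma cube_measurable j k : measurable (@dyadic_cube R n j k).
Proof. by rewrite cube_box; exact: box_measurable. Qed.

Lemma dyadic_measurable {Q} : @is_dyadic R n Q -> measurable Q.
Proof. by move=> [j [k ->]]; exact: cube_measurable. Qed.

Lemma dyadic_bounded {Q} : @is_dyadic R n Q -> @Pilot.Defs.bounded_set R n Q.
Proof.
move=> [j [k ->]]; rewrite cube_box.
exists (\sum_(i < n) (`|tnth (clo j k) i| + `|tnth (chi j k) i|)) => x hx i.
have [h1 h2] := andP (hx i).
rewrite (bigD1 i) //=.
have : 0 <= \sum_(i0 < n | i0 != i) (`|tnth (clo j k) i0| + `|tnth (chi j k) i0|).
  by apply: sumr_ge0 => ? _; rewrite addr_ge0.
have := ler_norm (tnth (clo j k) i); have := ler_norm (- tnth (clo j k) i).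
have := ler_norm (tnth (chi j k) i); have := ler_norm (- tnth (chi j k) i).
rewrite !normrN ler_norml.
move: (tnth (clo j k) i) (tnth (chi j k) i) h1 h2 => a b h1 h2.
move=> *; apply/andP; split; lra.
Qed.

Lemma dyadic_mu {mu : {measure set T -> \bar R}} {Q} :
  is_lebesgue mu -> @is_dyadic R n Q ->
  (0 < fine (mu Q))%R /\ mu Q = (fine (mu Q))%:E.
Proof.
move=> hmu [j [k ->]]; rewrite cube_box hmu; last first.
  move=> i; rewrite !tnth_mktuple; apply: ler_wpM2r; first by rewrite exprz_ge0.
  by rewrite lerDl.
split => //=; apply: prodr_gt0 => i _; rewrite !tnth_mktuple.
by rewrite -mulrBl addrAC subrr add0r mul1r exprz_gt0.
Qed.

Lemma enum_dyadic (F : set (set T)) : (forall P, F P -> @is_dyadic R n P) ->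
  exists e : nat -> set T,
    [/\ forall i, F (e i) \/ e i = set0,
        \bigcup_(P in F) P = \bigcup_i e i &
        forall a : set T -> \bar R, (forall P, (0 <= a P)%E) -> a set0 = 0%E ->
          (\sum_(i <oo) a (e i) = \esum_(P in F) a P)%E].
Proof.
move=> Fd.
pose g := fun p : int * n.-tuple int => @dyadic_cube R n p.1 p.2.
have cF : countable F.
  apply: (@sub_countable _ _ _ (g @` [set: int * n.-tuple int])); last first.
    apply: (card_le_trans (card_image_le _ _)); exact: countableP.
  apply: subset_card_le => P /Fd [j [k ->]]; by exists (j, k).
have [h hinj] := countable_injP _ cF.
pose e i := match pselect (exists P, F P /\ h P = i) with
  | left pf => proj1_sig (cid pf) | right _ => set0 end.
have eK i P : F P -> h P = i -> F (e i) /\ e i = P.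
  move=> FP hP; rewrite /e; case: pselect => [pf|[]]; last by exists P.
  case: (cid pf) => P' [FP' hP'] /=; split => //.
  by apply: hinj; rewrite ?inE // hP hP'.
have eN i : ~ (exists P, F P /\ h P = i) -> e i = set0.
  by move=> nh; rewrite /e; case: pselect.
have e1 i : F (e i) \/ e i = set0.
  have [[P [FP hP]]|nh] := pselect (exists P, F P /\ h P = i).
    by left; have [] := eK _ _ FP hP.
  by right; exact: eN.
exists e; split => //.
  apply/seteqP; split => x.
    by move=> [P FP Px]; exists (h P) => //; have [_ ->] := eK _ _ FP erefl.
  move=> [i _ xe]; have [Fe|e0] := e1 i; first by exists (e i).
  by rewrite e0 in xe.
move=> a a0 aset0.
rewrite nneseries_esumT // (esumID (h @` F)); last by move=> *; exact: a0.
rewrite [X in (_ + X)%E]esum1 ?adde0; last first.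
  move=> i [_ nK]; rewrite eN ?aset0 // => -[P [FP hP]]; apply: nK; by exists P.
rewrite setTI.
have FE : F = e @` (h @` F).
  apply/seteqP; split => P0.
    by move=> FP; exists (h P0); [exists P0|have [] := eK _ _ FP erefl].
  by move=> [_ [P FP <-] <-]; have [] := eK _ _ FP erefl.
rewrite [in RHS]FE (esum_image (h @` F) e a) //.
move=> i j; rewrite !inE => -[P FP <-] [P' FP' <-].
have [_ ->] := eK _ _ FP erefl; have [_ ->] := eK _ _ FP' erefl.
by move=> ->.
Qed.
End S.
Lemma fin_alg (R : realType) (IQ v u mQ B M a : R) : 0 < B -> 0 < M -> 0 < mQ ->
  1 < a -> M * (a - 1) < 1 -> IQ = v + u ->
  u <= B^-1 * ((a - 1) * mQ) -> (M * B)^-1 < IQ / mQ ->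
  IQ <= (1 - M * (a - 1))^-1 * v.
Proof.
move=> B0 M0 mQ0 a1 hc IQE hu hl.
have MB0 : 0 < M * B by rewrite mulr_gt0.
have h1 : mQ < M * B * IQ.
  rewrite ltr_pdivlMr // in hl.
  by rewrite -(ltr_pM2l MB0) mulrA mulfV ?gt_eqF // mul1r in hl.
have h2 : B * u <= (a - 1) * mQ by rewrite -ler_pdivlMl.
have h3 : u <= M * (a - 1) * IQ.
  rewrite -(ler_pM2r B0) mulrC; apply: (le_trans h2).
  have : (a - 1) * mQ <= (a - 1) * (M * B * IQ) by rewrite ler_wpM2l ?subr_ge0 ?ltW.
  move=> /le_trans; apply; rewrite le_eqVlt; apply/orP; left; apply/eqP.
  ring.
have c0 : 0 < 1 - M * (a - 1) by rewrite subr_gt0.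
rewrite ler_pdivlMl //; nra.
Qed.

Theorem mainTheorem4 (R : realType) (n : nat)
    (mu : {measure set (n.-tuple R) -> \bar R})
    (m : nat) (alpha : R) (S : set (set (n.-tuple R)))
    (f : n.-tuple R -> R) (k : nat) (Q : set (n.-tuple R)) :
  is_lebesgue mu ->
  (0 < m)%N ->
  1 < alpha ->
  (56%:R : R) ^+ m * (alpha - 1) < 1 ->
  carleson mu alpha S ->
  (forall x, 0 <= f x) ->
  loc_integrable_Rn mu f ->
  (0 < k)%N ->
  layer mu f S m k Q ->
  (\int[mu]_(x in Q) (f x)%:E
     <= ((1 - (56%:R : R) ^+ m * (alpha - 1))^-1)%:E
        * \int[mu]_(x in EQ (layer mu f S m k) Q) (f x)%:E)%E.
Proof.
move=> hmu m0 a1 hc [carlD carl] f0 [mfR floc] k0 LQ.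
set Sk := layer mu f S m k.
have mf := proj2 (measurable_realfun.measurable_EFinP _ f) mfR.
have f0E : forall x, (0 <= (EFin \o f) x)%E by move=> x; rewrite lee_fin.
have Skd P : Sk P -> is_dyadic P by move=> [SP _]; exact: carlD.
have cubeF P : Sk P -> [/\ measurable P, (0 < fine (mu P))%R, mu P = (fine (mu P))%:E
   & (\int[mu]_(x in P) (f x)%:E = (fine (\int[mu]_(x in P) (f x)%:E))%:E)%E].
  move=> SkP; have dP := Skd _ SkP.
  have mP := dyadic_measurable dP.
  have [h1 h2] := dyadic_mu hmu dP.
  split => //; rewrite fineK //.
  by apply: integrable_fin_num => //; apply: floc => //; exact: dyadic_bounded.
have [mQ mQ0 mQE IQE] := cubeF Q LQ.
set F := [set Q' | Sk Q' /\ Q' `<=` Q /\ Q' <> Q].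
have [e [e1 UE esE]] := @enum_dyadic R n F (fun P FP => Skd P FP.1).
set U := \bigcup_(P in F) P.
have me i : measurable (e i).
  by have [[/cubeF []]|->] := e1 i.
have mU : measurable U by rewrite /U UE; exact: bigcupT_measurable.
have UQ : U `<=` Q by move=> x [P [_ [PQ _]] /PQ].
have EE : EQ Sk Q = Q `\` U by [].
have mE : measurable (Q `\` U) by exact: measurableD.
have splitQ : (\int[mu]_(x in Q) (f x)%:E = \int[mu]_(x in Q `\` U) (f x)%:E
    + \int[mu]_(x in U) (f x)%:E)%E.
  rewrite -{1}(setDUK UQ) ge0_integral_setU; first exact: addeC.
  - exact: mU.
  - exact: mE.
  - exact: (measurable_funS measurableT (@subsetT _ _) mf).
  - by move=> x _; rewrite lee_fin.
  - by rewrite disj_set2E setDIK.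
pose g i := ((fun x => (f x)%:E) \_ (e i) : n.-tuple R -> \bar R).
have g0 i x : (0 <= g i x)%E by rewrite /g /patch; case: ifP; rewrite // lee_fin.
have mg i : measurable_fun setT (g i).
  by apply/(measurable_restrictT _ (me i)); exact: measurable_funTS mf.
have subadd : (\int[mu]_(x in U) (f x)%:E
     <= \sum_(i <oo) \int[mu]_(x in e i) (f x)%:E)%E.
  rewrite [X in (_ <= X)%E](_ : _ = \sum_(i <oo) \int[mu]_(x in setT) g i x)%E; last first.
    by apply: eq_eseriesr => i _; rewrite integral_mkcond.
  rewrite -integral_nneseries //.
  rewrite [X in (X <= _)%E]integral_mkcond; apply: ge0_le_integral => //.
  - by move=> x _; rewrite /patch; case: ifP; rewrite // lee_fin.
  - by apply/(measurable_restrictT _ mU); exact: measurable_funTS mf.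
  - by apply: ge0_emeasurable_sum => // k1 x _ _; exact: g0.
  move=> x _; rewrite /patch; case: ifPn => [|_]; last exact: nneseries_ge0.
  move=> /set_mem; rewrite /U UE => -[i _ xi].
  apply: (le_trans _ (nneseries_lim_ge i.+1 _)); last by move=> *; exact: g0.
  rewrite big_nat_recr //= {2}/g /patch mem_set //.
  by rewrite leeDr // sume_ge0.
set c0 := ((56%:R : R) ^+ (m * k))^-1.
have c00 : (0 <= c0)%R by rewrite invr_ge0 exprn_ge0.
have bnd : (\sum_(i <oo) \int[mu]_(x in e i) (f x)%:E
     <= c0%:E * \esum_(P in F) mu P)%E.
  rewrite -(esE (fun P => mu P)) //=.
  rewrite -nneseriesZl //.
  apply: lee_nneseries => [i _ _|i _]; first by apply: integral_ge0 => x _; rewrite lee_fin.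
  have [[SkP [PQ PnQ]]|->] := e1 i; last by rewrite integral_set0 measure0 mule0.
  have [mP mP0 mPE IPE] := cubeF _ SkP.
  have [_ [_ hi]] := SkP.
  rewrite IPE mPE -EFinM lee_fin.
  by rewrite /average ler_pdivrMr // in hi.
have hF : (\esum_(P in F) mu P <= ((alpha - 1) * fine (mu Q))%:E)%E.
  have hA := carl Q LQ.1.
  rewrite (esumID [set Q]) in hA; last by move=> *; exact: measure_ge0.
  rewrite (_ : [set P | S P /\ P `<=` Q] `&` [set Q] = [set Q]) in hA; last first.
    by apply/seteqP; split => [P [_ ->]|P ->] //; split => //; split => //; exact: LQ.1.
  rewrite esum_set1 in hA; last exact: measure_ge0.
  rewrite (esumID F) in hA; last by move=> *; exact: measure_ge0.
  rewrite (_ : _ `&` ~` [set Q] `&` F = F) in hA; last first.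
    apply/seteqP; split => [P [] //|P FP]; have [[SP _] [PQ PnQ]] := FP.
    by split => //; split.
  have h2 : (mu Q + \esum_(P in F) mu P <= alpha%:E * mu Q)%E.
    apply: le_trans hA; apply: leeD2l; apply: leeDl.
    by apply: esum_ge0 => *; exact: measure_ge0.
  have sF0 : (0 <= \esum_(P in F) mu P)%E by apply: esum_ge0 => *; exact: measure_ge0.
  move: h2 sF0; rewrite mQE; case: (\esum_(P in F) mu P) => [s| |] //=.
    rewrite -EFinD -EFinM !lee_fin => h _; rewrite mulrBl mul1r; lra.
have hU : (\int[mu]_(x in U) (f x)%:E <= (c0 * ((alpha - 1) * fine (mu Q)))%:E)%E.
  apply: (le_trans subadd); apply: (le_trans bnd); rewrite EFinM.
  exact: lee_wpmul2l.
have E0 : (0 <= \int[mu]_(x in Q `\` U) (f x)%:E)%E.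
  by apply: integral_ge0 => x _; rewrite lee_fin.
have U0 : (0 <= \int[mu]_(x in U) (f x)%:E)%E.
  by apply: integral_ge0 => x _; rewrite lee_fin.
have [_ [lo _]] := LQ.
rewrite EE; move: splitQ hU E0 U0; rewrite IQE.
case: (\int[mu]_(x in Q `\` U) (f x)%:E)%E => [v| |];
  case: (\int[mu]_(x in U) (f x)%:E)%E => [u| |] //=.
rewrite -EFinD => -[hQ] hu _ _; rewrite -EFinM lee_fin.
apply: (@fin_alg R _ v u (fine (mu Q)) ((56%:R : R) ^+ (m * k)) ((56%:R : R) ^+ m)) => //.
by rewrite -exprD -mulnS; exact: lo.
Qed.
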